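(* For $\phi\in[-\pi,\pi]$ and $n\in\mathbb{N}$ define $$f_n(z)=\sum_{k=1}^{n}\frac{z^ke^{i(n+1-k)\phi}}{n+1-k}=\frac{ze^{in\phi}}{n}+\frac{z^2e^{i(n-1)\phi}}{n-1}+\dots+\frac{z^{n-1}e^{2i\phi}}{2}+z^ne^{i\phi}.$$ There is an absolute constant $C_0>0$ such that $\|f_n\|_{\mathcal{B}}\ge\frac{\log n}{C_0}$ for all $n\in\mathbb{N}$ and all $\phi$.
   Context: The Bloch space $\mathcal{B}$ consists of holomorphic $f$ on $\mathbb{D}$ with $\|f\|_{\mathcal{B}}=|f(0)|+\sup_{z\in\mathbb{D}}(1-|z|^2)|f'(z)|<\infty$. *)

(* Defs.v *)
From HB Require Import structures.
From mathcomp Require Import all_boot all_order all_algebra.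
From mathcomp Require Import complex.
From mathcomp Require Import classical_sets boolp reals trigo exp.
Set Implicit Arguments. Unset Strict Implicit. Unset Printing Implicit Defensive.
Import Order.TTheory GRing.Theory Num.Theory.
Local Open Scope ring_scope.
Local Open Scope classical_set_scope.
Local Open Scope complex_scope.

Definition cmod (R : realType) (z : R[i]) : R := Normc.normc z.

Definition cexpi (R : realType) (t : R) : R[i] := (cos t +i* sin t).

(* Bloch norm of a polynomial p (entire, hence holomorphic on the disc):
   |p(0)| + sup_{|z|<1} (1-|z|^2) |p'(z)|. For polynomials the complex
   derivative coincides with the formal derivative p^`(). *)
Definition bloch_norm (R : realType) (p : {poly R[i]}) : R :=
  cmod p.[0] +
  sup [set (1 - cmod z ^+ 2) * cmod (p^`()).[z] | z in [set z : R[i] | cmod z < 1]].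

Definition f_n (R : realType) (phi : R) (n : nat) : {poly R[i]} :=
  \sum_(1 <= k < n.+1)
     ((cexpi (((n.+1 - k)%:R : R) * phi) / (n.+1 - k)%:R) *: 'X^k).

(* Main.v *)
Require Import Defs.
From HB Require Import structures.
From mathcomp Require Import all_boot all_order all_algebra.
From mathcomp Require Import complex.
From mathcomp Require Import classical_sets boolp reals trigo exp.
From mathcomp Require Import ring lra zify.
Import Order.TTheory GRing.Theory Num.Theory.
Local Open Scope ring_scope.
Local Open Scope complex_scope.

Section S.
Variable R : realType.

Lemma cexpiD (a b : R) : cexpi a * cexpi b = cexpi (a + b).
Proof.
rewrite /cexpi cosD sinD /=.
simpc. congr (_ +i* _); ring.
Qed.

Lemma cexpiX (t : R) m : cexpi t ^+ m = cexpi (m%:R * t).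
Proof.
elim: m => [|m IH].
  by rewrite expr0 mul0r /cexpi cos0 sin0.
by rewrite exprS IH cexpiD -{1}(mul1r t) -mulrDl -natr1 addrC.
Qed.

Lemma cmod_cexpi (t : R) : cmod (cexpi t) = 1.
Proof. by rewrite /cmod /cexpi /= cos2Dsin2 sqrtr1. Qed.

Lemma cmod_real (x : R) : cmod (x%:C) = `|x|.
Proof. by rewrite /cmod /= expr0n /= addr0 sqrtr_sqr. Qed.

Lemma cmodM (x y : R[i]) : cmod (x * y) = cmod x * cmod y.
Proof. exact: Normc.normcM. Qed.

Lemma cmod_ge0 (x : R[i]) : 0 <= cmod x.
Proof. by case: x => a b; rewrite /cmod /= sqrtr_ge0. Qed.

Lemma cmod_sum (I : Type) (r : seq I) (P : pred I) (F : I -> R[i]) :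
  cmod (\sum_(i <- r | P i) F i) <= \sum_(i <- r | P i) cmod (F i).
Proof.
apply: (big_ind2 (fun a b => cmod a <= b)).
- by rewrite /cmod Normc.normc0.
- move=> x1 x2 y1 y2 h1 h2. apply: le_trans (le_normcD _ _) _. exact: lerD.
- by [].
Qed.


Lemma fderiv_eval (phi r : R) n :
  (f_n phi n)^`().[r%:C * cexpi phi] =
  cexpi (n%:R * phi) * (\sum_(1 <= k < n.+1) (k%:R * r ^+ k.-1 / (n.+1 - k)%:R))%:C.
Proof.
rewrite /f_n raddf_sum horner_sum rmorph_sum mulr_sumr.
apply: eq_big_nat => k /andP[k1 kn].
rewrite /= derivZ derivXn hornerZ hornerMn hornerXn exprMn cexpiX.
rewrite rmorphM rmorphM rmorphXn fmorphV !rmorph_nat.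
have E : cexpi ((n.+1 - k)%:R * phi) * cexpi (k.-1%:R * phi) = cexpi (n%:R * phi).
  rewrite cexpiD -mulrDl; congr (cexpi (_ * _)).
  rewrite -natrD; congr (_%:R); lia.
rewrite -E.
ring.
Qed.


Lemma cmodX (z : R[i]) i : cmod (z ^+ i) = cmod z ^+ i.
Proof.
elim: i => [|i IH]; first by rewrite !expr0 /cmod Normc.normc1.
by rewrite !exprS cmodM IH.
Qed.

Lemma horner_bound (p : {poly R[i]}) z : cmod z <= 1 ->
  cmod p.[z] <= \sum_(i < size p) cmod p`_i.
Proof.
move=> hz; rewrite horner_coef; apply: le_trans (cmod_sum _ _ _ _) _.
apply: ler_sum => i _; rewrite cmodM cmodX.
rewrite -[X in _ <= X]mulr1; apply: ler_wpM2l; first exact: cmod_ge0.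
by apply: exprn_ile1 => //; exact: cmod_ge0.
Qed.

Lemma bloch_ge (p : {poly R[i]}) z : cmod z < 1 ->
  (1 - cmod z ^+ 2) * cmod (p^`()).[z] <= bloch_norm p.
Proof.
move=> hz; rewrite /bloch_norm.
set S := sup _.
suff h : (1 - cmod z ^+ 2) * cmod (p^`()).[z] <= S.
  apply: le_trans h _; rewrite lerDr; exact: cmod_ge0.
apply: ub_le_sup; last by exists z.
exists (\sum_(i < size p^`()) cmod p^`()`_i) => y [w /= hw <-].
have h0 := cmod_ge0 w.
have hb := horner_bound (p^`()) w (ltW hw).
have hc := cmod_ge0 (p^`()).[w].
have hs : 0 <= cmod w ^+ 2 by exact: sqr_ge0.
move: hb hc hs; set a := cmod w ^+ 2; set b := cmod _; set c := \sum_(_ < _) _.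
nra.
Qed.

Lemma bernoulli (x : R) j : 0 <= x <= 1 -> 1 - j%:R * x <= (1 - x) ^+ j.
Proof.
move=> /andP[x0 x1]; elim: j => [|j IH]; first by rewrite mul0r subr0 expr0.
rewrite exprSr -natr1.
have h1 : 0 <= 1 - x by lra.
have hj : (0:R) <= j%:R by exact: ler0n.
have := ler_wpM2r h1 IH; nra.
Qed.

Lemma T_eq n :
  \sum_(1 <= k < n.+1) (k%:R / (n.+1 - k)%:R : R) =
  n.+1%:R * (\sum_(1 <= j < n.+1) (j%:R : R)^-1) - n%:R.
Proof.
rewrite big_nat_rev /= mulr_sumr.
have -> : n%:R = \sum_(1 <= j < n.+1) (1 : R) by rewrite sumr_const_nat subn1.
rewrite -sumrB; apply: eq_big_nat => j /andP[j1 jn].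
have -> : (1 + n.+1 - j.+1 = n.+1 - j)%N by lia.
have -> : (n.+1 - (n.+1 - j) = j)%N by lia.
rewrite natrB; last by lia.
have jz : (j%:R : R) != 0 by rewrite pnatr_eq0 -lt0n.
by field.
Qed.


Lemma ln_H n : (1 <= n)%N ->
  ln (n%:R : R) <= 2 * (\sum_(1 <= j < n.+1) (j%:R : R)^-1 - 1).
Proof.
case: n => [//|m] _; elim: m => [|m IH].
  by rewrite big_nat1 invr1 subrr mulr0 ln1.
rewrite big_nat_recr //=.
set H := \sum_(1 <= j < m.+2) _ in IH *.
set a : R := m.+1%:R.
have a1 : 1 <= a by rewrite /a ler1n.
have a0 : 0 < a by lra.
have -> : (m.+2%:R : R) = a * (1 + a^-1).
  rewrite -[m.+2]addn1 natrD -/a; field; by rewrite addrC natr1 pnatr_eq0.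
have ai : 0 < a^-1 by rewrite invr_gt0.
rewrite -/a in IH; clearbody a H.
have e : ln (a * (1 + a^-1)) = ln a + ln (1 + a^-1).
  by apply: lnM; rewrite posrE //; apply: addr_gt0.
rewrite e.
have h1 : ln (1 + a^-1) <= a^-1.
  apply: le_ln1Dx; lra.
have h2 : a^-1 <= 2 * (a * (1 + a^-1))^-1.
  rewrite -subr_ge0.
  have -> : 2 * (a * (1 + a^-1))^-1 - a^-1 = (a - 1) / (a * (a + 1)).
    field; apply/andP; split; apply: lt0r_neq0; lra.
  apply: divr_ge0; first lra.
  apply: mulr_ge0; lra.
lra.
Qed.

End S.
Close Scope complex_scope.

Theorem mainTheorem8 (R : realType) :
  exists C0 : R, 0 < C0 /\
    forall (n : nat) (phi : R), (1 <= n)%N -> - pi <= phi <= pi ->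
      ln (n%:R) / C0 <= bloch_norm (f_n phi n).
Proof.
exists 8; split; first by [].
move=> n phi n1 _.
set N : R := n%:R.
have N1 : 1 <= N by rewrite /N ler1n.
set iN := N^-1.
have iN0 : 0 < iN by rewrite /iN invr_gt0; lra.
have iNN : iN * N = 1 by rewrite /iN mulVf //; apply: lt0r_neq0; lra.
clearbody iN.
have iN1 : iN <= 1 by nra.
set r := 1 - iN / 2.
have r0 : 0 <= r by rewrite /r; lra.
have r1 : r < 1 by rewrite /r; lra.
set z := ((r%:C)%C : R[i]) * cexpi phi.
have cz : cmod z = r by rewrite /z cmodM cmod_real cmod_cexpi mulr1 ger0_norm.
have := @bloch_ge R (f_n phi n) z; rewrite cz => /(_ r1).
apply: le_trans.
rewrite /z fderiv_eval cmodM cmod_cexpi mul1r cmod_real.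
set S := \sum_(1 <= k < n.+1) _.
set T := \sum_(1 <= k < n.+1) (k%:R / (n.+1 - k)%:R : R).
set H := \sum_(1 <= j < n.+1) (j%:R : R)^-1.
have hT : T = (N + 1) * H - N by rewrite /T T_eq /N natr1.
have hL := @ln_H R n n1; rewrite -/H -/N in hL.
have hH : 0 <= H by apply: sumr_ge0 => j _; rewrite invr_ge0.
have hST : T / 2 <= S.
  rewrite /T /S mulr_suml; apply: ler_sum_nat => k /andP[k1 kn].
  have hk : (0 : R) <= k%:R / (n.+1 - k)%:R by apply: divr_ge0.
  have hr : 1/2 <= r ^+ k.-1.
    have hb := @bernoulli R (iN / 2) k.-1.
    have hj : (k.-1%:R : R) <= N by rewrite /N ler_nat; lia.
    have := ler_wpM2r (ltW iN0) hj; rewrite [N * iN]mulrC iNN => hj'.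
    have : 0 <= iN / 2 <= 1 by apply/andP; split; lra.
    move=> /hb; rewrite -/r; nra.
  rewrite [X in _ <= X]mulrAC.
  move: hk hr; set a := _ / _; set b := r ^+ _.
  nra.
have hT0 : 0 <= T by apply: sumr_ge0 => k _; apply: divr_ge0.
have hS0 : 0 <= S by lra.
rewrite ger0_norm //.
have hA : iN / 2 <= 1 - r ^+ 2 by rewrite /r; nra.
have h1 := ler_wpM2r hS0 hA.
have h2 : iN / 2 * (T / 2) <= iN / 2 * S by apply: ler_wpM2l => //; lra.
have e : iN / 2 * (T / 2) = (H - 1) / 4 + iN * H / 4.
  have -> : H - 1 = iN * N * H - iN * N by rewrite iNN mul1r.
  by rewrite hT; field.
have hH' : 0 <= iN * H by apply: mulr_ge0; lra.
clearbody S T H r.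
lra.
Qed.
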